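(* Let $U$ be a VLA-J-SS. Let $U_1$ be the subspace spanned by all vectors $u_m(v_nw)-\varepsilon_{u,v}v_n(u_mw)-\sum_{i\ge0}\binom{m}{i}(u_iv)_{n+m-i}w$ with $u,v,w\in U$ homogeneous and $m,n\in\mathbb{N}$, and let $U_2$ be the subspace spanned by all vectors $$\sum_{i\ge0}(-1)^i\binom{k}{i}\big(u_{m+k-i}(v_{n+i}w)-\varepsilon_{u,v}(-1)^kv_{n+k-i}(u_{m+i}w)\big)-\sum_{i\ge0}\binom{m}{i}(u_{k+i}v)_{m+n-i}w$$ with $u,v,w\in U$ homogeneous and $k,m,n\in\mathbb{N}$. Then $U_1=U_2$.
   Context: All spaces over $\mathbb{C}$; $\mathbb{N}=\{0,1,2,\dots\}$; $\varepsilon_{u,v}=(-1)^{|u||v|}$. A VLA-J-SS is a $\mathbb{Z}_2$-graded space $U$ with an even linear operator $D$ and bilinear products $u_nv$ ($n\in\mathbb{N}$) such that for homogeneous $u,v$: $u_nv=0$ for $n$ large; $(Du)_nv=-nu_{n-1}v$ (read as $0$ for $n=0$); $D(u_nv)=(Du)_nv+u_n(Dv)$; $|u_nv|=|u|+|v|$. *)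

(* Defs.v *)
From HB Require Import structures.
From mathcomp Require Import all_boot all_order all_algebra.
Set Implicit Arguments. Unset Strict Implicit. Unset Printing Implicit Defensive.
Import Order.TTheory GRing.Theory Num.Theory.
Local Open Scope ring_scope.

(* Z2-grading of U: P false = even part, P true = odd part; both are
   subspaces and U is their direct sum. *)
Definition is_subspace (K : fieldType) (U : lmodType K) (S : U -> Prop) : Prop :=
  S 0 /\ (forall (a : K) (x y : U), S x -> S y -> S (a *: x + y)).

Definition Z2_grading (K : fieldType) (U : lmodType K) (P : bool -> U -> Prop) : Prop :=
  (forall b, is_subspace (P b)) /\
  (forall u : U, exists u0 u1, P false u0 /\ P true u1 /\ u = u0 + u1) /\
  (forall u : U, P false u -> P true u -> u = 0).

(* epsilon_{u,v} = (-1)^{|u||v|} for homogeneous u in P a, v in P b *)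
Definition eps (K : fieldType) (a b : bool) : K := (-1) ^+ (a && b).

(* VLA-J-SS structure on (U, P, D, prod) where prod n u v = u_n v. *)
Definition is_VLA_J_SS (K : fieldType) (U : lmodType K) (P : bool -> U -> Prop)
  (D : U -> U) (prod : nat -> U -> U -> U) : Prop :=
  Z2_grading P /\
  (forall (a : K) (x y : U), D (a *: x + y) = a *: D x + D y) /\
  (forall b u, P b u -> P b (D u)) /\
  (forall n (a : K) (x y z : U), prod n (a *: x + y) z = a *: prod n x z + prod n y z) /\
  (forall n (a : K) (x y z : U), prod n z (a *: x + y) = a *: prod n z x + prod n z y) /\
  (forall a b (u v : U), P a u -> P b v ->
     (exists N, forall n, (N <= n)%N -> prod n u v = 0) /\
     (forall n, prod n (D u) v = - (n%:R *: prod n.-1 u v)) /\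
     (forall n, D (prod n u v) = prod n (D u) v + prod n u (D v)) /\
     (forall n, P (a (+) b) (prod n u v))).

Definition in_span (K : fieldType) (U : lmodType K) (S : U -> Prop) (x : U) : Prop :=
  exists s : seq (K * U), (forall p, p \in s -> S p.2) /\
    x = \sum_(p <- s) p.1 *: p.2.

Definition gen1 (K : fieldType) (U : lmodType K) (P : bool -> U -> Prop)
  (prod : nat -> U -> U -> U) (x : U) : Prop :=
  exists a b c (u v w : U) (m n : nat), P a u /\ P b v /\ P c w /\
    x = prod m u (prod n v w) - eps K a b *: prod n v (prod m u w)
        - \sum_(i < m.+1) 'C(m, i)%:R *: prod (n + m - i)%N (prod i u v) w.

Definition gen2 (K : fieldType) (U : lmodType K) (P : bool -> U -> Prop)
  (prod : nat -> U -> U -> U) (x : U) : Prop :=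
  exists a b c (u v w : U) (k m n : nat), P a u /\ P b v /\ P c w /\
    x = \sum_(i < k.+1) ((-1) ^+ i * 'C(k, i)%:R) *:
           (prod (m + k - i)%N u (prod (n + i)%N v w)
            - (eps K a b * (-1) ^+ k) *: prod (n + k - i)%N v (prod (m + i)%N u w))
        - \sum_(i < m.+1) 'C(m, i)%:R *: prod (m + n - i)%N (prod (k + i)%N u v) w.

(* Main.v *)
Require Import Defs.
From mathcomp Require Import all_boot all_order all_algebra.
Local Open Scope ring_scope.
From mathcomp Require Import zify ring.
Import GRing.Theory.

Lemma comb (R : comNzRingType) (k m l : nat) :
  \sum_(i < k.+1) ((-1) ^+ i * 'C(k, i)%:R) * 'C(m + k - i, l)%:R
  = (if (k <= l)%N then 'C(m, l - k)%:R else 0) :> R.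
Proof.
elim: k m => [|k IH] m.
  by rewrite big_ord1 /= expr0 mul1r bin0 mul1r addn0 subn0 subn0.
have E : forall m', \sum_(i < k.+2) ((-1) ^+ i * 'C(k.+1, i)%:R) * 'C(m' + k.+1 - i, l)%:R
   = (\sum_(i < k.+1) ((-1) ^+ i * 'C(k, i)%:R) * 'C(m'.+1 + k - i, l)%:R
     - \sum_(i < k.+1) ((-1) ^+ i * 'C(k, i)%:R) * 'C(m' + k - i, l)%:R : R).
  move=> m'.
  rewrite big_ord_recl /= expr0 mul1r bin0 subn0.
  under eq_bigr => i _ do rewrite /bump /= add1n binS natrD mulrDr mulrDl
       exprS mulN1r !mulNr addnS subSS.
  rewrite big_split /= !sumrN mul1r addrA; congr (_ + _).
  rewrite [in RHS]big_ord_recl /= expr0 mul1r bin0 subn0 addSn addnS.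
  rewrite big_ord_recr /= (@bin_small k k.+1) // mulr0n mulr0 mul0r addr0 mul1r.
  congr (_ + _); rewrite -sumrN.
  apply: eq_bigr => i _; rewrite /bump /= add1n exprS mulN1r subSS.
  by rewrite !mulNr.
rewrite E !IH.
case: (ltngtP k l) => Hkl /=.
- have -> : (l - k = (l - k.+1).+1)%N by lia.
  by rewrite binS natrD [X in X - _]addrC addrK.
- by rewrite subrr.
- by rewrite Hkl subnn !bin0 subrr.
Qed.

Lemma key (K : comNzRingType) (U : lmodType K) (prod : nat -> U -> U -> U)
  (e : K) (u v w : U) (k m n : nat) :
  \sum_(i < k.+1) ((-1) ^+ i * 'C(k, i)%:R) *:
     (prod (m + k - i)%N u (prod (n + i)%N v w)
      - (e * (-1) ^+ k) *: prod (n + k - i)%N v (prod (m + i)%N u w))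
  - \sum_(i < m.+1) 'C(m, i)%:R *: prod (m + n - i)%N (prod (k + i)%N u v) w
  = \sum_(i < k.+1) ((-1) ^+ i * 'C(k, i)%:R) *:
     (prod (m + k - i)%N u (prod (n + i)%N v w)
      - e *: prod (n + i)%N v (prod (m + k - i)%N u w)
      - \sum_(l < (m + k - i).+1) 'C(m + k - i, l)%:R *:
           prod (n + i + (m + k - i) - l)%N (prod l u v) w).
Proof.
set T := fun l => prod (n + m + k - l)%N (prod l u v) w.
have ES : forall i : 'I_k.+1,
   \sum_(l < (m + k - i).+1) 'C(m + k - i, l)%:R *:
           prod (n + i + (m + k - i) - l)%N (prod l u v) w
   = \sum_(l < k + m.+1) 'C(m + k - i, l)%:R *: T l.
  move=> i; have Hi := ltn_ord i.
  rewrite (big_ord_widen (k + m.+1) (fun l => 'C(m + k - i, l)%:R *: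
           prod (n + i + (m + k - i) - l)%N (prod l u v) w)); last by lia.
  rewrite big_mkcond; apply: eq_bigr => l _ /=.
  case: ifP => Hl.
    by rewrite /T; congr (_ *: prod _ _ _); lia.
  by rewrite bin_small ?scale0r //; lia.
under [in RHS]eq_bigr => i _ do rewrite ES !scalerDr !scalerN.
under [in LHS]eq_bigr => i _ do rewrite scalerDr scalerN.
rewrite !big_split /= !sumrN.
f_equal; [f_equal; f_equal|f_equal].
- rewrite (reindex_inj rev_ord_inj) /=.
  apply: eq_bigr => i _; rewrite !scalerA; have Hi := ltn_ord i.
  have -> : (n + k - (k - i) = n + i)%N by lia.
  have -> : (m + (k - i) = m + k - i)%N by lia.
  congr (_ *: _).
  rewrite bin_sub //.
  have -> : ((-1) ^+ k = (-1) ^+ (k - i) * (-1) ^+ i :> K).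
    by rewrite -exprD subnK.
  have Hs : ((-1) ^+ (k - i) * (-1) ^+ (k - i) = 1 :> K) by rewrite -expr2 sqrr_sign.
  rewrite subSS.
  transitivity (((-1) ^+ (k - i) * (-1) ^+ (k - i)) * ((-1) ^+ i * 'C(k, i)%:R * e) : K); first by ring.
  by rewrite Hs mul1r.
- under [RHS]eq_bigr => i _ do rewrite scaler_sumr.
  rewrite exchange_big /=.
  under [RHS]eq_bigr => l _ do (under eq_bigr => i _ do rewrite scalerA; rewrite -scaler_suml comb).
  rewrite [RHS]big_split_ord /= [X in _ = X + _]big1 ?add0r; last first.
    by move=> l _; rewrite /= ifF ?scale0r //; apply/negbTE; rewrite -ltnNge ltn_ord.
  apply: eq_bigr => j _ /=; rewrite leq_addr addKn /T.
  by congr (_ *: prod _ _ _); lia.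
Qed.

Lemma span0 (K : fieldType) (U : lmodType K) (S : U -> Prop) : in_span S 0.
Proof. by exists [::]; split => //; rewrite big_nil. Qed.

Lemma spanZD (K : fieldType) (U : lmodType K) (S : U -> Prop) (a : K) (y z : U) :
  in_span S y -> in_span S z -> in_span S (a *: y + z).
Proof.
move=> [s1 [H1 ->]] [s2 [H2 ->]].
exists ([seq (a * p.1, p.2) | p <- s1] ++ s2); split.
  move=> p; rewrite mem_cat => /orP [/mapP [q Hq ->] /=|]; [exact: H1 | exact: H2].
rewrite big_cat big_map /= scaler_sumr; congr (_ + _).
by apply: eq_bigr => p _; rewrite scalerA.
Qed.

Lemma span1 (K : fieldType) (U : lmodType K) (S : U -> Prop) (y : U) :
  S y -> in_span S y.
Proof.
move=> Hy; exists [:: (1, y)]; split; first by move=> p; rewrite inE => /eqP ->.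
by rewrite big_seq1 scale1r.
Qed.

Lemma span_trans (K : fieldType) (U : lmodType K) (S T : U -> Prop) (x : U) :
  (forall y, S y -> in_span T y) -> in_span S x -> in_span T x.
Proof.
move=> HST [s [Hs ->]].
elim: s Hs => [|p s IH] Hs; first by rewrite big_nil; exact: span0.
rewrite big_cons; apply: spanZD; first by apply: HST; apply: Hs; rewrite inE eqxx.
by apply: IH => q Hq; apply: Hs; rewrite inE Hq orbT.
Qed.

Lemma span_sum (K : fieldType) (U : lmodType K) (S : U -> Prop) N (c : 'I_N -> K) (f : 'I_N -> U) :
  (forall i, in_span S (f i)) -> in_span S (\sum_(i < N) c i *: f i).
Proof.
move=> Hf; elim/big_rec: _ => [|i x _ Hx]; first exact: span0.
exact: spanZD.
Qed.

Theorem lemma6p4 (K : numClosedFieldType) (U : lmodType K)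
  (P : bool -> U -> Prop) (D : U -> U) (prod : nat -> U -> U -> U) :
  is_VLA_J_SS P D prod ->
  forall x : U, in_span (gen1 P prod) x <-> in_span (gen2 P prod) x.
Proof.
move=> _ x; split; apply: span_trans => y.
- move=> [a [b [c [u [v [w [m [n [Pa [Pb [Pc ->]]]]]]]]]]].
  apply: span1; exists a, b, c, u, v, w, 0%N, m, n; do 3!split => //.
  rewrite big_ord1 /= expr0 mul1r bin0 scale1r mulr1 !addn0 !subn0.
  congr (_ - _); apply: eq_bigr => i _; by rewrite add0n addnC.
- move=> [a [b [c [u [v [w [k [m [n [Pa [Pb [Pc ->]]]]]]]]]]]].
  rewrite key; apply: span_sum => i; apply: span1.
  exists a, b, c, u, v, w, (m + k - i)%N, (n + i)%N; do 3!split => //.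
Qed.
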